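(* Let $\alpha>1$ and $D,R_{tot},L_0>0$. Let $(k_{nf}^0,k_{pf}^0)$ and $(k_{nf}^1,k_{pf}^1)$ be two pairs of positive parameters, and suppose a function $R\in C^2([-L_0,L_0])$ that is positive on $(-L_0,L_0)$ and not constant solves $$-D R''(x)=-k_{nf}R(x)+k_{pf}R(x)^{\alpha}\Big(1-\frac{1}{R_{tot}}\int_{-L_0}^{L_0}R(s)\,ds\Big),\qquad R(\pm L_0)=0,$$ both for $(k_{nf},k_{pf})=(k_{nf}^0,k_{pf}^0)$ and for $(k_{nf},k_{pf})=(k_{nf}^1,k_{pf}^1)$, with $\int_{-L_0}^{L_0}R<R_{tot}$. Then $k_{nf}^0=k_{nf}^1$ and $k_{pf}^0=k_{pf}^1$.
   Context: All constants are fixed and positive, with $\alpha>1$. *)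

(* Defs.v *)
From Stdlib Require Import Reals.
Open Scope R_scope.

Definition deriv_on (a b : R) (f f' : R -> R) : Prop :=
  forall x, a <= x <= b ->
    limit1_in (fun h => (f (x + h) - f x) / h)
              (fun h => h <> 0 /\ a <= x + h <= b) (f' x) 0.

Definition cont_on (a b : R) (g : R -> R) : Prop :=
  forall x, a <= x <= b ->
    limit1_in g (fun y => a <= y <= b) (g x) x.

Definition C2_on (a b : R) (f f1 f2 : R -> R) : Prop :=
  deriv_on a b f f1 /\ deriv_on a b f1 f2 /\ cont_on a b f2.

(* x^alpha for x >= 0 (0^alpha = 0 since alpha > 0); negative x never occurs. *)
Definition rpow (x alpha : R) : R :=
  if Rle_dec x 0 then 0 else Rpower x alpha.

(* The nonlocal steady-state problem with parameters (knf,kpf), given the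
   value I of the integral of R over [-L0,L0]. *)
Definition solves (D Rtot L0 alpha knf kpf I : R) (f f2 : R -> R) : Prop :=
  (forall x, -L0 <= x <= L0 ->
     - D * f2 x = - knf * f x + kpf * rpow (f x) alpha * (1 - I / Rtot))
  /\ f (-L0) = 0 /\ f L0 = 0.

(* Main.v *)
Require Import Defs.
From Stdlib Require Import Reals Lra Classical.
Open Scope R_scope.

Lemma endpoint_contra (L0 p : R) (f f1 : R -> R) :
  0 < L0 -> 0 < p -> deriv_on (-L0) L0 f f1 -> f (-L0) = 0 ->
  (forall z, -L0 < z < L0 -> f z = p) -> False.
Proof.
  intros HL Hp Hd Hf0 Hc.
  assert (H := Hd (-L0) ltac:(lra)).
  unfold limit1_in, limit_in in H; simpl in H; unfold R_dist in H.
  destruct (H 1 ltac:(lra)) as [d [Hd0 Hdd]].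
  set (m := Rabs (f1 (-L0)) + 2).
  assert (Hm : 0 < m) by (unfold m; pose proof (Rabs_pos (f1 (-L0))); lra).
  set (h := Rmin (Rmin (d/2) L0) (p / m)).
  assert (Hh1 : h <= d/2) by (unfold h; pose proof (Rmin_l (Rmin (d/2) L0) (p/m)); pose proof (Rmin_l (d/2) L0); lra).
  assert (Hh2 : h <= L0) by (unfold h; pose proof (Rmin_l (Rmin (d/2) L0) (p/m)); pose proof (Rmin_r (d/2) L0); lra).
  assert (Hh3 : h <= p/m) by (unfold h; apply Rmin_r).
  assert (Hpm : 0 < p/m) by (apply Rdiv_lt_0_compat; lra).
  assert (Hh0 : 0 < h) by (unfold h; apply Rmin_pos; [apply Rmin_pos|]; lra).
  specialize (Hdd h).
  assert (Hfz : f (-L0 + h) = p) by (apply Hc; lra).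
  rewrite Hfz, Hf0 in Hdd.
  assert (Hq : Rabs ((p - 0) / h - f1 (-L0)) < 1).
  { apply Hdd. split; [split; lra|]. rewrite Rminus_0_r, Rabs_right; lra. }
  assert (Hpmh : m <= p / h).
  { apply (Rmult_le_reg_r h); [lra|]. unfold Rdiv. rewrite Rmult_assoc, Rinv_l; [|lra].
    rewrite Rmult_1_r. apply (Rmult_le_reg_r (/m)). apply Rinv_0_lt_compat; lra.
    replace (m * h * / m) with h by (field; lra). exact Hh3. }
  replace (p - 0) with p in Hq by ring.
  pose proof (Rle_abs (f1 (-L0))). unfold m in Hpmh.
  apply Rabs_def2 in Hq. lra.
Qed.

Lemma rpow_pos_eq (x a : R) : 0 < x -> rpow x a = Rpower x a.
Proof. intro H. unfold rpow. destruct (Rle_dec x 0); [lra|reflexivity]. Qed.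

Theorem mainTheorem6
  (alpha D Rtot L0 knf0 kpf0 knf1 kpf1 : R)
  (Halpha : 1 < alpha) (HD : 0 < D) (HRtot : 0 < Rtot) (HL0 : 0 < L0)
  (Hknf0 : 0 < knf0) (Hkpf0 : 0 < kpf0) (Hknf1 : 0 < knf1) (Hkpf1 : 0 < kpf1)
  (f f1 f2 : R -> R)
  (HC2 : C2_on (-L0) L0 f f1 f2)
  (Hpos : forall x, -L0 < x < L0 -> 0 < f x)
  (Hnonconst : exists x y, -L0 <= x <= L0 /\ -L0 <= y <= L0 /\ f x <> f y)
  (pr : Riemann_integrable f (-L0) L0)
  (Hint : RiemannInt pr < Rtot)
  (Hsol0 : solves D Rtot L0 alpha knf0 kpf0 (RiemannInt pr) f f2)
  (Hsol1 : solves D Rtot L0 alpha knf1 kpf1 (RiemannInt pr) f f2) :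
  knf0 = knf1 /\ kpf0 = kpf1.
Proof.
  destruct HC2 as [Hd _].
  destruct Hsol0 as [E0 [B0 _]]. destruct Hsol1 as [E1 _].
  set (c := 1 - RiemannInt pr / Rtot).
  assert (Hc : 0 < c).
  { unfold c. assert (RiemannInt pr / Rtot < 1); [|lra].
    apply (Rmult_lt_reg_r Rtot); [lra|]. unfold Rdiv. rewrite Rmult_assoc, Rinv_l; lra. }
  set (a := knf1 - knf0). set (b := (kpf1 - kpf0) * c).
  set (beta := alpha - 1).
  assert (Key : forall u, -L0 < u < L0 -> a = b * Rpower (f u) beta).
  { intros u Hu. pose proof (Hpos u Hu) as Pu.
    pose proof (E0 u ltac:(lra)) as e0. pose proof (E1 u ltac:(lra)) as e1.
    rewrite rpow_pos_eq in e0, e1 by exact Pu. fold c in e0, e1.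
    assert (Hpw : Rpower (f u) alpha = f u * Rpower (f u) beta).
    { replace alpha with (1 + beta) at 1 by (unfold beta; ring).
      rewrite Rpower_plus, Rpower_1; auto. }
    rewrite Hpw in e0, e1.
    apply (Rmult_eq_reg_l (f u)); [|lra]. unfold a, b. nra. }
  assert (Two : exists u v, -L0 < u < L0 /\ -L0 < v < L0 /\ f u <> f v).
  { apply NNPP. intro Hn. apply (endpoint_contra L0 (f 0) f f1 HL0); auto.
    - apply Hpos; lra.
    - intros z Hz. apply NNPP. intro Hne. apply Hn. exists z, 0. split; [lra|split; [lra|auto]]. }
  destruct Two as [u [v [Hu [Hv Huv]]]].
  pose proof (Key u Hu) as Ku. pose proof (Key v Hv) as Kv.
  assert (Hneq : Rpower (f u) beta <> Rpower (f v) beta).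
  { intro He. apply Huv. apply ln_inv; try (apply Hpos; auto).
    unfold Rpower in He. apply (f_equal ln) in He. rewrite !ln_exp in He.
    apply (Rmult_eq_reg_l beta); [exact He|unfold beta; lra]. }
  assert (Hb : b = 0).
  { apply (Rmult_eq_reg_r (Rpower (f u) beta - Rpower (f v) beta)); [|lra].
    rewrite Rmult_0_l. nra. }
  assert (Ha : a = 0) by (rewrite Ku, Hb; ring).
  unfold a in Ha. unfold b in Hb.
  apply Rmult_integral in Hb. destruct Hb; split; lra.
Qed.
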